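(* Let $\sigma$ satisfy Condition $O_N$. Then: (i) for $\delta_0\le\lambda<1$ and $0<r\le r_0$, the sets $L_i^r(\lambda)$ ($1\le i\le N$), $L^r(\lambda)$, $\Sigma^r(\lambda)$ and $\Sigma(1)$ are open; (ii) if $1\le k\le N$ and $0<r<s\le r_0$, then $\overline{S_k^r(\lambda)}\subset S_k^s(\lambda)$ for all $0\le\lambda\le1$, and $\overline{\Sigma^r(\lambda)}\subset\Sigma^s(\lambda)$ for all $\delta_0\le\lambda<1$; (iii) if $\Delta\subset\Sigma(1)$ is compact, then $\Delta\subset\Sigma^r(\lambda)$ for some $r\in(0,r_0)$ and $\lambda\in[\delta_0,1)$.
   Context: Wave cone: $\Gamma=\{(p\otimes a,B):p\in\mathbb R^m,\ a\in\mathbb R^n\setminus\{0\},\ B\in\mathbb R^{m\times n},\ Ba=0\}$, $p\otimes a=pa^T$. Write $\rho=(\rho^1,\rho^2)\in\mathbb R^{m\times n}\times\mathbb R^{m\times n}$; $\mathbb B_r,\bar{\mathbb B}_r$ are open/closed balls of radius $r$ about $0$. Condition $O_N$ ($N\ge2$): $\sigma\colon\mathbb R^{m\times n}\to\mathbb R^{m\times n}$ continuous with graph $\mathcal K$; there exist $r_0>0$, $0<\delta_1<\delta_2<1$ and continuous $(\kappa_i,\gamma_i)\colon\bar{\mathbb B}_{r_0}\to[1/\delta_2,1/\delta_1]\times\Gamma$ with $\sum_{i=1}^N\gamma_i\equiv0$ such that, with $\pi_1(\rho)=\rho$, $\pi_i(\rho)=\rho+\gamma_1(\rho)+\dots+\gamma_{i-1}(\rho)$,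 $\xi_i(\rho)=\pi_i(\rho)+\kappa_i(\rho)\gamma_i(\rho)$: (P1)(i) $\xi_i(\rho)\in\mathcal K$ on $\bar{\mathbb B}_{r_0}$; (ii) $\xi_i^1(\bar{\mathbb B}_{r_0})\cap\xi_j^1(\bar{\mathbb B}_{r_0})=\pi_i^1(\bar{\mathbb B}_{r_0})\cap\pi_j^1(\bar{\mathbb B}_{r_0})=\emptyset$ for $i\neq j$; (P2) with $S_i^r(\lambda)=\{\lambda\xi_i(\rho)+(1-\lambda)\pi_i(\rho):\rho\in\mathbb B_r\}$ ($0<r\le r_0$, $0\le\lambda\le1$), there exists $\delta_0\in(\delta_2,1)$ such that for all $0<r\le r_0$ and $\lambda\in\{0\}\cup[\delta_0,1)$ the sets $S_1^r(\lambda),\dots,S_N^r(\lambda)$ are open and pairwise disjoint. Derived sets: $L_i^r(\lambda)=\bigcup\{[\alpha,\beta]:\alpha\in S_i^r(\lambda),\beta\in S_i^r(0),\alpha-\beta\in\Gamma\}$; $L^r(\lambda)=\bigcup_iL_i^r(\lambda)$; $\Sigma^r(\lambda)=\bigcup_{\delta_0\le\lambda'\le\lambda}L^r(\lambda')$ for $\delta_0\le\lambda<1$; $\Sigma(1)=\bigcup_{\delta_0\le\lambda<1}\Sigma^{r_0}(\lambda)$. *)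

(* Defs.v *)
From HB Require Import structures.
From mathcomp Require Import all_boot all_order all_algebra.
From mathcomp Require Import all_classical all_reals all_analysis.
Set Implicit Arguments. Unset Strict Implicit. Unset Printing Implicit Defensive.
Import Order.TTheory GRing.Theory Num.Theory.
Import numFieldTopology.Exports numFieldNormedType.Exports.
Local Open Scope ring_scope.
Local Open Scope classical_set_scope.

Section Defs.
Variables (R : realType) (m n N : nat).

Local Notation P := ('M[R]_(m, n) * 'M[R]_(m, n))%type.

(* wave cone Gamma = {(p (x) a, B) : a <> 0, B a = 0},  p (x) a = p a^T *)
Definition wave_cone : set P :=
  [set x | exists (p : 'cV[R]_m) (a : 'cV[R]_n) (B : 'M[R]_(m, n)),
      a != 0 /\ B *m a = 0 /\ x = (p *m a^T, B)].

Definition sqnorm (x : P) : R :=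
  \sum_(i < m) \sum_(j < n) (x.1 i j) ^+ 2 + \sum_(i < m) \sum_(j < n) (x.2 i j) ^+ 2.

Definition oball (r : R) : set P := [set x | sqnorm x < r ^+ 2].
Definition cball (r : R) : set P := [set x | sqnorm x <= r ^+ 2].

Definition graph (sigma : 'M[R]_(m, n) -> 'M[R]_(m, n)) : set P :=
  [set x | x.2 = sigma x.1].

Variables (kappa : 'I_N -> P -> R) (gamma : 'I_N -> P -> P).

(* indices are 0-based: i : 'I_N stands for i+1 in the paper *)
Definition pi_ (i : 'I_N) (rho : P) : P :=
  rho + \sum_(j < N | (j < i)%N) gamma j rho.
Definition xi_ (i : 'I_N) (rho : P) : P :=
  pi_ i rho + kappa i rho *: gamma i rho.

Definition Sset (r lam : R) (i : 'I_N) : set P :=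
  [set lam *: xi_ i rho + (1 - lam) *: pi_ i rho | rho in oball r].

Definition segment (a b : P) : set P :=
  [set t *: a + (1 - t) *: b | t in `[0, 1]%classic].

Definition Lset_i (r lam : R) (i : 'I_N) : set P :=
  [set x | exists a b, Sset r lam i a /\ Sset r 0 i b /\ wave_cone (a - b)
                       /\ segment a b x].
Definition Lset (r lam : R) : set P := [set x | exists i, Lset_i r lam i x].

Variable delta0 : R.
Definition Sigma (r lam : R) : set P :=
  [set x | exists lam', delta0 <= lam' <= lam /\ Lset r lam' x].
Definition Sigma1 (r0 : R) : set P :=
  [set x | exists lam, delta0 <= lam < 1 /\ Sigma r0 lam x].

(* Condition O_N, with the constant delta0 of (P2) as an explicit parameter *)
Definition condition_O (sigma : 'M[R]_(m, n) -> 'M[R]_(m, n))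
    (r0 delta1 delta2 : R) : Prop :=
  (2 <= N)%N /\
      continuous sigma /\
      0 < r0 /\ 0 < delta1 /\ delta1 < delta2 /\ delta2 < 1 /\
      (forall i, {within cball r0, continuous (kappa i)} /\
                 {within cball r0, continuous (gamma i)}) /\
      (forall i rho, cball r0 rho ->
         1 / delta2 <= kappa i rho <= 1 / delta1 /\ wave_cone (gamma i rho)) /\
      (forall rho, cball r0 rho -> \sum_(i < N) gamma i rho = 0) /\
      (forall i rho, cball r0 rho -> graph sigma (xi_ i rho)) /\
      (forall i j, i != j ->
         ((fun rho => (xi_ i rho).1) @` cball r0)
           `&` ((fun rho => (xi_ j rho).1) @` cball r0) = set0 /\
         ((fun rho => (pi_ i rho).1) @` cball r0)
           `&` ((fun rho => (pi_ j rho).1) @` cball r0) = set0) /\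
      (delta2 < delta0 /\ delta0 < 1 /\
       forall r lam, 0 < r -> r <= r0 -> (lam = 0 \/ (delta0 <= lam /\ lam < 1)) ->
         (forall i, open (Sset r lam i)) /\
         (forall i j, i != j -> Sset r lam i `&` Sset r lam j = set0)).

End Defs.

(* Main.v *)
Require Import Defs.
From HB Require Import structures.
From mathcomp Require Import all_boot all_order all_algebra.
From mathcomp Require Import all_classical all_reals all_analysis.
From mathcomp Require Import lra.
From mathcomp Require Import finmap.
Import Order.TTheory GRing.Theory Num.Theory.
Import numFieldTopology.Exports numFieldNormedType.Exports.
Local Open Scope ring_scope.
Local Open Scope classical_set_scope.
Section Gen.
Variable R : realType.

Lemma cvg_mx_entry {T : Type} (F : set_system T) {FF : Filter F} p q
  (f : T -> 'M[R]_(p,q)) (L : 'M[R]_(p,q)) :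
  (forall i j, (fun x => f x i j) @ F --> L i j) -> f @ F --> L.
Proof.
move=> H; apply/cvg_ballP => e e0.
have : \forall x \near F, forall i j, ball (L i j) e (f x i j).
  apply: filter_forall => i; apply: filter_forall => j.
  exact: (cvg_ball (H i j)).
by apply: filterS => x Hx; split.
Qed.

Lemma cvg_big {T : Type} (F : set_system T) {FF : Filter F} (V : normedModType R)
  (I : Type) (r : seq I) (P : pred I) (f : I -> T -> V) (l : I -> V) :
  (forall i, f i @ F --> l i) ->
  (fun x => \sum_(i <- r | P i) f i x) @ F --> \sum_(i <- r | P i) l i.
Proof.
move=> H; elim: r => [|a r IH].
  under eq_fun do rewrite big_nil. rewrite big_nil; exact: cvg_cst.
under eq_fun do rewrite big_cons. rewrite big_cons.
case: (P a).
  exact: (cvgD (H a) IH).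
exact: IH.
Qed.

Lemma cvg_into_within {T U : topologicalType} (F : set_system T) {FF : Filter F}
  (f : T -> U) (A : set U) (z : U) :
  f @ F --> z -> (\forall x \near F, A (f x)) -> f @ F --> within A (nbhs z).
Proof.
move=> fz FA W /= Wz.
have := fz _ Wz; apply: filter_app; apply: filterS FA => x Ax h; exact: h Ax.
Qed.

End Gen.
Section Cpt.
Variable R : realType.
Lemma vec_mx_entry p q (w : 'rV[R]_(p*q)) i j : vec_mx w i j = w 0 (mxvec_index i j).
Proof. by rewrite -{2}(vec_mxK w) mxvecE. Qed.

Lemma vec_mx_continuous p q : continuous (@vec_mx R p q).
Proof.
move=> v; apply: (@cvg_mx_entry _ _ (nbhs v) (nbhs_filter v)) => i j.
under eq_fun do rewrite vec_mx_entry. rewrite vec_mx_entry.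
exact: coord_continuous.
Qed.

Lemma mx_box_compact p q (c : R) :
  compact [set M : 'M[R]_(p,q) | forall i j, - c <= M i j <= c].
Proof.
have Bc : compact [set v : 'rV[R]_(p*q) | forall k, `[-c, c]%classic (v ord0 k)].
  by apply: (@rV_compact _ _ (fun=> `[-c, c]%classic)) => k; exact: segment_compact.
have -> : [set M : 'M[R]_(p,q) | forall i j, - c <= M i j <= c] =
   vec_mx @` [set v : 'rV[R]_(p*q) | forall k, `[-c, c]%classic (v ord0 k)].
  apply/seteqP; split => [M HM|_ [v Hv <-]].
    exists (mxvec M); last exact: mxvecK.
    move=> k; case: (mxvec_indexP k) => i j; rewrite /= mxvecE in_itv /=; exact: HM.
  move=> i j; rewrite vec_mx_entry; have := Hv (mxvec_index i j).
  by rewrite /= in_itv.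
apply: continuous_compact Bc; apply: continuous_subspaceT; exact: vec_mx_continuous.
Qed.
End Cpt.
Section Cpt2.
Variable R : realType.
Definition sqm {p q} (M : 'M[R]_(p,q)) := \sum_(i < p) \sum_(j < q) M i j ^+ 2.

Lemma sqm_cvg {T : Type} (F : set_system T) {FF : Filter F} p q
  (f : T -> 'M[R]_(p,q)) (L : 'M[R]_(p,q)) : f @ F --> L -> (fun x => sqm (f x)) @ F --> sqm L.
Proof.
move=> fL; rewrite /sqm; apply: cvg_big => i; apply: cvg_big => j.
have e : (fun x => f x i j) @ F --> L i j.
  exact: (cvg_comp _ _ fL (@coord_continuous _ _ _ i j L)).
rewrite expr2; under eq_fun do rewrite expr2.
exact: (cvgM e e).
Qed.

Lemma sqm_ge0 p q (M : 'M[R]_(p,q)) : 0 <= sqm M.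
Proof. by apply: sumr_ge0 => i _; apply: sumr_ge0 => j _; exact: sqr_ge0. Qed.

Lemma sqm_entry p q (M : 'M[R]_(p,q)) i j : M i j ^+ 2 <= sqm M.
Proof.
rewrite /sqm (bigD1 i) //= (bigD1 j) //= -addrA lerDl.
apply: addr_ge0; first by apply: sumr_ge0 => k _; exact: sqr_ge0.
by apply: sumr_ge0 => k _; apply: sumr_ge0 => l _; exact: sqr_ge0.
Qed.

Lemma sq_bound (a c : R) : 0 <= c -> a ^+ 2 <= c ^+ 2 -> - c <= a <= c.
Proof. move=> c0 h; apply/andP; split; nra. Qed.

Lemma sqm_ball_compact p q (c : R) : 0 <= c ->
  compact [set M : 'M[R]_(p,q) | sqm M <= c ^+ 2].
Proof.
move=> c0; refine (subclosed_compact _ (@mx_box_compact R p q c) _).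
  have -> : [set M : 'M[R]_(p,q) | sqm M <= c ^+ 2] = sqm @^-1` [set y | y <= c ^+ 2] by [].
  apply: (proj1 (continuous_closedP _)); last exact: closed_le.
  move=> M; apply: (@sqm_cvg _ (nbhs M) (nbhs_filter M)); exact: cvg_id.
move=> M /= HM i j; apply: sq_bound => //; apply: le_trans HM; exact: sqm_entry.
Qed.

Lemma sqm_sphere_compact p q :
  compact [set M : 'M[R]_(p,q) | sqm M = 1].
Proof.
refine (subclosed_compact _ (@mx_box_compact R p q 1) _).
  have -> : [set M : 'M[R]_(p,q) | sqm M = 1] = sqm @^-1` [set y | y = 1] by [].
  apply: (proj1 (continuous_closedP _)); last exact: closed_eq.
  move=> M; apply: (@sqm_cvg _ (nbhs M) (nbhs_filter M)); exact: cvg_id.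
move=> M /= HM i j; apply: sq_bound => //; rewrite expr1n -HM; exact: sqm_entry.
Qed.
End Cpt2.
Arguments sqm {R p q}.
Arguments sqm_entry {R p q}.
Arguments sqm_ge0 {R p q}.
Section Wave.
Variable R : realType.
Lemma sqm_col n (a : 'cV[R]_n) : (a^T *m a) = (sqm a)%:M.
Proof.
rewrite [LHS]mx11_scalar; congr (_%:M).
rewrite mxE /sqm; apply: eq_bigr => i _; rewrite big_ord1 mxE expr2 //.
Qed.

Lemma sqmZ p q (k : R) (M : 'M[R]_(p,q)) : sqm (k *: M) = k ^+ 2 * sqm M.
Proof.
rewrite /sqm mulr_sumr; apply: eq_bigr => i _; rewrite mulr_sumr.
by apply: eq_bigr => j _; rewrite mxE exprMn.
Qed.

Lemma sqm_eq0 p q (M : 'M[R]_(p,q)) : sqm M = 0 -> M = 0.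
Proof.
move=> h; apply/matrixP => i j; rewrite mxE.
have := sqm_entry M i j; rewrite h => h2.
have : M i j ^+ 2 = 0 by apply/eqP; rewrite eq_le h2 sqr_ge0.
by move/eqP; rewrite sqrf_eq0 => /eqP.
Qed.

Lemma wave_coneP m n (x : 'M[R]_(m,n) * 'M[R]_(m,n)) :
  wave_cone x <-> exists a : 'cV[R]_n, sqm a = 1 /\ x.2 *m a = 0 /\ x.1 *m a *m a^T = x.1.
Proof.
split.
  move=> [p [a0 [B [a0n [Ba0 ->]]]]] /=.
  set s := sqm a0.
  have s0 : 0 < s.
    rewrite lt_def sqm_ge0 andbT; apply/eqP => /sqm_eq0 h; by rewrite h eqxx in a0n.
  set c := Num.sqrt s.
  have c0 : 0 < c by rewrite sqrtr_gt0.
  have cs : c ^+ 2 = s by rewrite sqr_sqrtr // ltW.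
  exists (c^-1 *: a0); split.
    rewrite sqmZ -/s exprVn cs mulVf //; exact: lt0r_neq0.
  split; first by rewrite -scalemxAr Ba0 scaler0.
  have tZ : (c^-1 *: a0)^T = c^-1 *: a0^T by apply/matrixP=> i j; rewrite !mxE.
  rewrite tZ -scalemxAr -scalemxAr -scalemxAl scalerA -(mulmxA p) sqm_col mul_mx_scalar -scalemxAl scalerA -/s -expr2 exprVn cs.
  by rewrite mulVf ?scale1r // lt0r_neq0.
move=> [a [a1 [Ba Ma]]].
exists (x.1 *m a), a, x.2; split.
  apply/eqP => a0; move: a1; rewrite a0 -(scale0r (0 : 'cV[R]_n)) sqmZ expr2 !mul0r => /eqP; by rewrite eq_sym oner_eq0.
split=> //; by case: x Ma Ba => x1 x2 /= ->.
Qed.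
End Wave.
Arguments wave_coneP {R m n}.
Section G1.
Lemma closed_image_cond {X Y Z : topologicalType} (hY : hausdorff_space Y)
  (A : set X) (F : X -> Y) (g : X -> Z) (C : set Z) :
  compact A -> closed C -> {within A, continuous F} -> {within A, continuous g} ->
  closed [set F x | x in A `&` g @^-1` C].
Proof.
move=> cA cC cF cg.
have ch : compact ((fun x => (F x, g x)) @` A).
  apply: continuous_compact cA; apply/subspace_continuousP => x Ax.
  apply: cvg_pair.
    exact: (proj1 (subspace_continuousP _ _) cF x Ax).
  exact: (proj1 (subspace_continuousP _ _) cg x Ax).
have cK : compact ((fun x => (F x, g x)) @` A `&` (@snd Y Z) @^-1` C).
  apply: compact_closedI ch _; apply: (proj1 (continuous_closedP _)) cC.
  by move=> z; exact: cvg_snd.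
have -> : [set F x | x in A `&` g @^-1` C] = fst @` ((fun x => (F x, g x)) @` A `&` (@snd Y Z) @^-1` C).
  apply/seteqP; split => [_ [x [Ax Cx] <-]|_ [_ [[x Ax <-] Cx] <-]].
    by exists (F x, g x) => //; split => //; exists x.
  by exists x.
apply: compact_closed hY _; apply: continuous_compact cK.
by apply: continuous_subspaceT => z; exact: cvg_fst.
Qed.
End G1.
Section Gen2.
Variable R : realType.
Lemma cvg_entry {T : Type} (F : set_system T) {FF : Filter F} p q
  (f : T -> 'M[R]_(p,q)) (A : 'M[R]_(p,q)) i j :
  f @ F --> A -> (fun x => f x i j) @ F --> A i j.
Proof. move=> fA; exact: (cvg_comp _ _ fA (@coord_continuous _ _ _ i j A)). Qed.

Lemma cvg_mulmx {T : Type} (F : set_system T) {FF : Filter F} p q k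
  (f : T -> 'M[R]_(p,q)) (g : T -> 'M[R]_(q,k)) (A : 'M[R]_(p,q)) (B : 'M[R]_(q,k)) :
  f @ F --> A -> g @ F --> B -> (fun x => f x *m g x) @ F --> A *m B.
Proof.
move=> fA gB; apply: cvg_mx_entry => i j.
under eq_fun do rewrite mxE. rewrite mxE.
apply: cvg_big => l; apply: cvgM; exact: cvg_entry.
Qed.

Lemma cvg_trmx {T : Type} (F : set_system T) {FF : Filter F} p q
  (f : T -> 'M[R]_(p,q)) (A : 'M[R]_(p,q)) :
  f @ F --> A -> (fun x => (f x)^T) @ F --> A^T.
Proof.
move=> fA; apply: cvg_mx_entry => i j.
under eq_fun do rewrite mxE. rewrite mxE; exact: cvg_entry.
Qed.
End Gen2.

Lemma fst_cvgF {T : Type} {F : set_system T} {A B : topologicalType}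
  {f : T -> A * B} {a : A * B} : f @ F --> a -> (fun x => (f x).1) @ F --> a.1.
Proof. move=> h; exact: (cvg_comp _ _ h (@cvg_fst _ _ (nbhs a.1) (nbhs a.2) _)). Qed.
Lemma snd_cvgF {T : Type} {F : set_system T} {A B : topologicalType}
  {f : T -> A * B} {a : A * B} : f @ F --> a -> (fun x => (f x).2) @ F --> a.2.
Proof. move=> h; exact: (cvg_comp _ _ h (@cvg_snd _ _ (nbhs a.1) (nbhs a.2) _)). Qed.
Section Main.
Variables (R : realType) (m n N : nat).
Local Notation P := ('M[R]_(m, n) * 'M[R]_(m, n))%type.
Variables (kappa : 'I_N -> P -> R) (gamma : 'I_N -> P -> P) (r0 : R).
Hypothesis kc : forall i, {within cball r0, continuous (kappa i)}.
Hypothesis gc : forall i, {within cball r0, continuous (gamma i)}.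

Lemma pi_cvg i rho : cball r0 rho ->
  pi_ gamma i @ within (cball r0) (nbhs rho) --> pi_ gamma i rho.
Proof.
move=> Hr; rewrite /pi_.
apply: cvgD; first exact: cvg_within_filter cvg_id.
apply: cvg_big => j; exact: (proj1 (subspace_continuousP _ _) (gc j) _ Hr).
Qed.

Lemma xi_cvg i rho : cball r0 rho ->
  xi_ kappa gamma i @ within (cball r0) (nbhs rho) --> xi_ kappa gamma i rho.
Proof.
move=> Hr; rewrite /xi_.
apply: cvgD; first exact: pi_cvg.
apply: cvgZ.
  exact: (proj1 (subspace_continuousP _ _) (kc i) _ Hr).
exact: (proj1 (subspace_continuousP _ _) (gc i) _ Hr).
Qed.

Lemma fst_cvg {A B : topologicalType} (x : A * B) : fst @ nbhs x --> x.1.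
Proof. exact: cvg_fst. Qed.
Lemma snd_cvg {A B : topologicalType} (x : A * B) : snd @ nbhs x --> x.2.
Proof. exact: cvg_snd. Qed.
Lemma hausP : hausdorff_space P.
Proof. exact: norm_hausdorff. Qed.

Lemma within_self {T : topologicalType} (A : set T) (x : T) : \forall y \near within A (nbhs x), A y.
Proof. exact: near_withinT. Qed.

Lemma within_sub {T : topologicalType} (A B : set T) (x : T) : A `<=` B ->
  (fun y => y) @ within A (nbhs x) --> within B (nbhs x).
Proof.
move=> AB; apply: cvg_into_within; first exact: cvg_within_filter cvg_id.
by apply: filterS (within_self A x) => y /AB.
Qed.

Lemma pi_cvgA (A : set P) i rho : A `<=` cball r0 -> A rho ->
  pi_ gamma i @ within A (nbhs rho) --> pi_ gamma i rho.
Proof. move=> Ar Ar0 W /(pi_cvg i rho (Ar _ Ar0)); rewrite !nbhs_simpl /within /=; apply: filterS => y hy Ay; exact: hy (Ar _ Ay). Qed.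

Lemma xi_cvgA (A : set P) i rho : A `<=` cball r0 -> A rho ->
  xi_ kappa gamma i @ within A (nbhs rho) --> xi_ kappa gamma i rho.
Proof. move=> Ar Ar0 W /(xi_cvg i rho (Ar _ Ar0)); rewrite !nbhs_simpl /within /=; apply: filterS => y hy Ay; exact: hy (Ar _ Ay). Qed.

Lemma cball_compact r : 0 <= r -> compact (cball r : set P).
Proof.
move=> r0'.
refine (subclosed_compact _ (compact_setX (@sqm_ball_compact R m n r r0') (@sqm_ball_compact R m n r r0')) _).
  have -> : (cball r : set P) = (fun x : P => sqm x.1 + sqm x.2) @^-1` [set y | y <= r ^+ 2] by [].
  apply: (proj1 (continuous_closedP _)); last exact: closed_le.
  move=> x; apply: cvgD.
    exact: (@sqm_cvg _ _ (nbhs x) (nbhs_filter x) _ _ fst x.1 (fst_cvg x)).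
  exact: (@sqm_cvg _ _ (nbhs x) (nbhs_filter x) _ _ snd x.2 (snd_cvg x)).
move=> x /= Hx; split => /=.
  apply: le_trans Hx; rewrite lerDl; exact: sqm_ge0.
apply: le_trans Hx; rewrite lerDr; exact: sqm_ge0.
Qed.

Lemma sq_lt (r s : R) : 0 < r -> r < s -> r ^+ 2 < s ^+ 2.
Proof. move=> *; nra. Qed.
Lemma sq_le (r s : R) : 0 <= r -> r <= s -> r ^+ 2 <= s ^+ 2.
Proof. move=> *; nra. Qed.

Lemma closure_S k r s lam : 0 < r -> r < s -> s <= r0 ->
  closure (Sset kappa gamma r lam k) `<=` Sset kappa gamma s lam k.
Proof.
move=> r0' rs sr0.
set f := fun rho => lam *: xi_ kappa gamma k rho + (1 - lam) *: pi_ gamma k rho.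
have sub0 : (cball r : set P) `<=` cball r0.
  move=> x /= Hx; apply: le_trans Hx _; apply: sq_le; [exact: ltW|exact: ltW (lt_le_trans rs sr0)].
have cl : closed (f @` (cball r : set P)).
  refine (compact_closed hausP (continuous_compact _ (cball_compact r (ltW r0')))).
  apply/subspace_continuousP => x Ax; apply: cvgD; apply: cvgZ.
  - exact: cvg_cst.
  - exact: xi_cvgA.
  - exact: cvg_cst.
  - exact: pi_cvgA.
have S1 : Sset kappa gamma r lam k `<=` f @` (cball r : set P).
  move=> _ [rho Hr <-]; exists rho => //; exact: ltW.
apply: subset_trans (closure_subset S1) _; rewrite -(proj1 (closure_id _) cl).
move=> _ [rho Hr <-]; exists rho => //; apply: le_lt_trans Hr _; exact: sq_lt.
Qed.

Definition aS (i : 'I_N) (l : R) (rho : P) : P :=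
  l *: xi_ kappa gamma i rho + (1 - l) *: pi_ gamma i rho.

Lemma aS_cvg {T : Type} (G : set_system T) {GG : Filter G} i
  (lf : T -> R) (rf : T -> P) l0 rho0 : cball r0 rho0 ->
  lf @ G --> l0 -> rf @ G --> within (cball r0) (nbhs rho0) ->
  (fun x => aS i (lf x) (rf x)) @ G --> aS i l0 rho0.
Proof.
move=> H0 hl hr; rewrite /aS; apply: cvgD; apply: cvgZ => //.
- exact: (cvg_comp _ _ hr (xi_cvg i rho0 H0)).
- apply: cvgB => //; exact: cvg_cst.
- exact: (cvg_comp _ _ hr (pi_cvg i rho0 H0)).
Qed.

Local Notation X := (R * R * P * P * 'cV[R]_n)%type.

Definition Fmap i (y : X) : P :=
  y.1.1.1.1 *: aS i y.1.1.1.2 y.1.1.2 + (1 - y.1.1.1.1) *: aS i 0 y.1.2.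
Definition dmap i (y : X) : P := aS i y.1.1.1.2 y.1.1.2 - aS i 0 y.1.2.
Definition gmap i (y : X) : 'cV[R]_m * 'M[R]_(m, n) :=
  ((dmap i y).2 *m y.2, (dmap i y).1 *m y.2 *m y.2^T - (dmap i y).1).
Definition Box d0 lam r : set X :=
  `[0, 1]%classic `*` `[d0, lam]%classic `*` (cball r : set P) `*` (cball r : set P)
   `*` [set a : 'cV[R]_n | sqm a = 1].

Lemma Box_compact d0 lam r : 0 <= r -> compact (Box d0 lam r).
Proof.
move=> r0'; apply: compact_setX; last exact: sqm_sphere_compact.
apply: compact_setX; last exact: cball_compact.
apply: compact_setX; last exact: cball_compact.
apply: compact_setX; exact: segment_compact.
Qed.


Lemma cball_sub {r} : 0 <= r -> r <= r0 -> (cball r : set P) `<=` cball r0.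
Proof. move=> r0' rr0 x /= Hx; apply: le_trans Hx _; exact: sq_le. Qed.

Lemma Box_cont d0 lam r i : 0 <= r -> r <= r0 ->
  {within Box d0 lam r, continuous (Fmap i)} /\ {within Box d0 lam r, continuous (gmap i)}.
Proof.
move=> r0' rr0; have sub0 := cball_sub r0' rr0.
have H : forall y, Box d0 lam r y ->
  [/\ (fun z : X => z.1.1.1.1) @ within (Box d0 lam r) (nbhs y) --> y.1.1.1.1,
      (fun z : X => z.1.1.1.2) @ within (Box d0 lam r) (nbhs y) --> y.1.1.1.2,
      (fun z : X => z.1.1.2) @ within (Box d0 lam r) (nbhs y) --> within (cball r0) (nbhs y.1.1.2),
      (fun z : X => z.1.2) @ within (Box d0 lam r) (nbhs y) --> within (cball r0) (nbhs y.1.2) &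
      (fun z : X => z.2) @ within (Box d0 lam r) (nbhs y) --> y.2].
  move=> y Hy.
  have hid : (fun z : X => z) @ within (Box d0 lam r) (nbhs y) --> y.
    exact: cvg_within_filter cvg_id.
  have FW : Filter (within (Box d0 lam r) (nbhs y)) by exact: within_filter.
  have h1 := fst_cvgF hid; have h2 := fst_cvgF h1; have h3 := fst_cvgF h2.
  split.
  - exact: fst_cvgF h3.
  - exact: snd_cvgF h3.
  - apply: cvg_into_within; first exact: snd_cvgF h2.
    by apply: filterS (near_withinT _ _) => z [[[_ Hz] _] _]; exact: sub0.
  - apply: cvg_into_within; first exact: snd_cvgF h1.
    by apply: filterS (near_withinT _ _) => z [[_ Hz] _]; exact: sub0.
  - exact: snd_cvgF hid.
have Hy0 : forall y, Box d0 lam r y -> cball r0 y.1.1.2 /\ cball r0 y.1.2.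
  by move=> y [[[_ Hz] Hz'] _]; split; exact: sub0.
split; apply/subspace_continuousP => y Hy; have [ht hl hr hr' ha] := H y Hy;
  have [c1 c2] := Hy0 y Hy.
  rewrite /Fmap; apply: cvgD; apply: cvgZ => //.
  - exact: aS_cvg.
  - apply: cvgB => //; exact: cvg_cst.
  - apply: aS_cvg => //; exact: cvg_cst.
have hd : dmap i @ within (Box d0 lam r) (nbhs y) --> dmap i y.
  rewrite /dmap; apply: cvgB; apply: aS_cvg => //; exact: cvg_cst.
rewrite /gmap; apply: (@cvg_pair _ _ _ _ (nbhs _) (nbhs _) _ (nbhs_filter _) (nbhs_filter _)).
  apply: cvg_mulmx => //; exact: snd_cvgF hd.
apply: cvgB; last exact: fst_cvgF hd.
apply: cvg_mulmx; last exact: cvg_trmx.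
apply: cvg_mulmx => //; exact: fst_cvgF hd.
Qed.

Lemma closed_set0 : closed [set (0 : 'cV[R]_m * 'M[R]_(m, n))].
Proof. apply: compact_closed; [exact: norm_hausdorff | exact: compact_set1]. Qed.

Lemma closure_Sigma d0 r s lam : 0 < r -> r < s -> s <= r0 ->
  closure (Sigma kappa gamma d0 r lam) `<=` Sigma kappa gamma d0 s lam.
Proof.
move=> r0' rs sr0; have rr0 : r <= r0 by apply: ltW; exact: lt_le_trans rs sr0.
set U := \bigcup_(i in [set: 'I_N])
   [set Fmap i y | y in Box d0 lam r `&` gmap i @^-1` [set 0]].
have cU : closed U.
  apply: closed_bigcup; first exact: finite_finset.
  move=> i _; have [cF cg] := Box_cont d0 lam r i (ltW r0') rr0.
  exact: (closed_image_cond hausP _ _ _ _ (Box_compact d0 lam r (ltW r0')) closed_set0 cF cg).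
have S1 : Sigma kappa gamma d0 r lam `<=` U.
  move=> x [l [/andP[dl ll] [i [a [b [[rho Hr Ea] [[rho' Hr' Eb] [W [t Ht Ex]]]]]]]]].
  have [dir [d1 [d2 d3]]] := (proj1 (wave_coneP _)) W.
  exists i => //; exists ((((t, l), rho), rho'), dir).
    split; first by split; [split; [split; [split|]|]|] => //=;
      [rewrite in_itv /= dl ll | exact: ltW | exact: ltW].
    change (((aS i l rho - aS i 0 rho').2 *m dir, (aS i l rho - aS i 0 rho').1 *m dir *m dir^T - (aS i l rho - aS i 0 rho').1) = 0).
    by rewrite /aS Ea Eb d2 d3 subrr.
  by rewrite /Fmap /aS /= Ea Eb.
have S2 : U `<=` Sigma kappa gamma d0 s lam.
  move=> x [i _ [y [[[[[Ht Hl] Hr] Hr'] Ha] Hg] <-]].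
  have g1 := congr1 fst Hg; have g2 := congr1 snd Hg; rewrite /= in g1 g2.
  move: Hl; rewrite /= in_itv /= => Hl.
  exists y.1.1.1.2; split => //.
  exists i, (aS i y.1.1.1.2 y.1.1.2), (aS i 0 y.1.2); split.
    exists y.1.1.2 => //; apply: le_lt_trans Hr _; exact: sq_lt.
  split.
    exists y.1.2 => //; apply: le_lt_trans Hr' _; exact: sq_lt.
  split.
    apply/wave_coneP; exists y.2; split => //; split; first exact: g1.
    by apply/eqP; rewrite -subr_eq0; apply/eqP; exact: g2.
  by exists y.1.1.1.1.
apply: subset_trans (closure_subset S1) _; rewrite -(proj1 (closure_id _) cU) //.
Qed.

Lemma transl_nbhs (x : P) {a : P} {A : set P} : nbhs a A -> nbhs x (fun z => A (a + (z - x))).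
Proof.
move=> na.
have h : (fun z : P => a + (z - x)) @ nbhs x --> a + (x - x).
  apply: (@cvgD _ _ _ (nbhs x) (nbhs_filter x)); first exact: cvg_cst.
  apply: (@cvgB _ _ _ (nbhs x) (nbhs_filter x)); [exact: cvg_id | exact: cvg_cst].
rewrite subrr addr0 in h; exact: h na.
Qed.

Lemma open_Li r lam i : open (Sset kappa gamma r lam i) -> open (Sset kappa gamma r 0 i) ->
  open (Lset_i kappa gamma r lam i).
Proof.
move=> oA oB; rewrite openE => x [a [b [Sa [Sb [W [t Ht Ex]]]]]].
rewrite openE in oA; rewrite openE in oB.
have h1 := transl_nbhs x (oA a Sa); have h2 := transl_nbhs x (oB b Sb).
rewrite /interior; apply: (@filterS2 _ _ (nbhs_filter x) _ _ _ _ h1 h2) => z za zb.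
exists (a + (z - x)), (b + (z - x)); split => //; split => //; split.
  by rewrite opprD addrACA subrr addr0.
exists t => //; rewrite -[RHS](subrKC x z); move: (z - x) => w.
by rewrite !scalerDr addrACA Ex -scalerDl (addrC t) subrK scale1r.
Qed.

Lemma open_Lset r lam : (forall i, open (Lset_i kappa gamma r lam i)) -> open (Lset kappa gamma r lam).
Proof.
move=> h; rewrite openE => x [i Li]; have := h i; rewrite openE => /(_ x Li) hx.
by apply: (@filterS _ _ (nbhs_filter x) _ _ _ hx) => y yi; exists i.
Qed.

Lemma open_Sigma d0 r lam : (forall l, d0 <= l <= lam -> open (Lset kappa gamma r l)) ->
  open (Sigma kappa gamma d0 r lam).
Proof.
move=> h; rewrite openE => x [l [hl Li]]; have := h l hl; rewrite openE => /(_ x Li) hx.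
by apply: (@filterS _ _ (nbhs_filter x) _ _ _ hx) => y yi; exists l.
Qed.

Lemma open_Sigma1 d0 : (forall l, d0 <= l < 1 -> open (Sigma kappa gamma d0 r0 l)) ->
  open (Sigma1 kappa gamma d0 r0).
Proof.
move=> h; rewrite openE => x [l [hl Li]]; have := h l hl; rewrite openE => /(_ x Li) hx.
by apply: (@filterS _ _ (nbhs_filter x) _ _ _ hx) => y yi; exists l.
Qed.

Lemma Sigma_mono d0 r r' lam lam' : 0 <= r -> r <= r' -> lam <= lam' ->
  Sigma kappa gamma d0 r lam `<=` Sigma kappa gamma d0 r' lam'.
Proof.
move=> r0' rr' ll x [l [/andP[h1 h2] [i [a [b [[rho Hr Ea] [[rho' Hr' Eb] rest]]]]]]].
exists l; split; first by rewrite h1 (le_trans h2 ll).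
exists i, a, b; split; first by exists rho => //; apply: lt_le_trans Hr _; exact: sq_le.
split => //; by exists rho' => //; apply: lt_le_trans Hr' _; exact: sq_le.
Qed.

Lemma sqnorm_ge0 (x : P) : 0 <= sqnorm x.
Proof. by apply: addr_ge0; exact: sqm_ge0. Qed.

Lemma Sigma_shrink d0 lam x : 0 < r0 -> Sigma kappa gamma d0 r0 lam x ->
  exists r, 0 < r /\ r < r0 /\ Sigma kappa gamma d0 r lam x.
Proof.
move=> r0p [l [hl [i [a [b [[rho Hr Ea] [[rho' Hr' Eb] rest]]]]]]].
set M := Num.max (sqnorm rho) (sqnorm rho').
have M1 : sqnorm rho <= M by rewrite le_max lexx.
have M2 : sqnorm rho' <= M by rewrite le_max lexx orbT.
have M0 : 0 <= M by apply: le_trans M1; exact: sqnorm_ge0.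
have Mr : M < r0 ^+ 2 by rewrite /M gt_max Hr Hr'.
set r := Num.sqrt ((M + r0 ^+ 2) / 2).
have e : r ^+ 2 = (M + r0 ^+ 2) / 2 by rewrite sqr_sqrtr // divr_ge0 // addr_ge0 // sqr_ge0.
have rp : 0 < r by rewrite sqrtr_gt0 divr_gt0 // ltr_pwDr // exprn_gt0.
have h1 : M < r ^+ 2 by rewrite e; lra.
have h2 : r ^+ 2 < r0 ^+ 2 by rewrite e; lra.
exists r; split => //; split; first nra.
exists l; split => //; exists i, a, b; split; first by exists rho => //; exact: le_lt_trans M1 h1.
split => //; by exists rho' => //; exact: le_lt_trans M2 h1.
Qed.

Lemma pick_max (S : R -> Prop) a b : S a -> S b -> exists c, [/\ S c, a <= c & b <= c].
Proof. move=> Sa Sb; have [h|h] := leP a b; [by exists b | exists a; split => //; exact: ltW]. Qed.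

Lemma part3 d0 (Delta : set P) : 0 < r0 -> d0 < 1 ->
  (forall r lam, 0 < r -> r <= r0 -> d0 <= lam -> lam < 1 -> open (Sigma kappa gamma d0 r lam)) ->
  compact Delta -> Delta `<=` Sigma1 kappa gamma d0 r0 ->
  exists r lam, 0 < r /\ r < r0 /\ d0 <= lam /\ lam < 1 /\ Delta `<=` Sigma kappa gamma d0 r lam.
Proof.
move=> r0p d01 oS cD DS.
set D := [set p : R * R | (0 < p.1 /\ p.1 < r0) /\ (d0 <= p.2 /\ p.2 < 1)].
have cD2 : cover_compact Delta.
  have := @compact_cover ((P : normedModType R) : ptopologicalType); move=> e; rewrite -e; exact: cD.
have hcov : Delta `<=` cover D (fun p : R * R => Sigma kappa gamma d0 p.1 p.2).
  move=> x /DS [l [hl Sx]]; have [r [rp [rr Sr]]] := Sigma_shrink _ _ _ r0p Sx.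
  exists (r, l) => //=; split; split => //; move: hl => /andP[] //.
have [D' D'D cov] := cD2 (R * R)%type D (fun p => Sigma kappa gamma d0 p.1 p.2)
  (fun p Dp => oS _ _ (proj1 (proj1 Dp)) (ltW (proj2 (proj1 Dp))) (proj1 (proj2 Dp)) (proj2 (proj2 Dp)))
  hcov.
have [q [Dq qub]] : exists q, D q /\ forall p : R * R, p \in D' -> p.1 <= q.1 /\ p.2 <= q.2.
  suff hs : forall s : seq (R * R), (forall p, p \in s -> D p) ->
      exists q, D q /\ forall p, p \in s -> p.1 <= q.1 /\ p.2 <= q.2.
    apply: hs => p pD; by have := D'D p pD; rewrite in_setE.
  elim => [_|p s IH hs].
    exists (r0 / 2, d0); split => //; split; split => //=; lra.
  have [q [Dq qs]] := IH (fun p' ps => hs p' ltac:(by rewrite inE ps orbT)).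
  have Dp : D p by apply: hs; rewrite inE eqxx.
  have [c1 [Hc1 c1p c1q]] := @pick_max (fun c => 0 < c /\ c < r0) p.1 q.1 (proj1 Dp) (proj1 Dq).
  have [c2 [Hc2 c2p c2q]] := @pick_max (fun c => d0 <= c /\ c < 1) p.2 q.2 (proj2 Dp) (proj2 Dq).
  exists (c1, c2); split => // p'; rewrite inE => /orP[/eqP ->|p's] //.
  have [h1 h2] := qs p' p's; split; [exact: le_trans c1q | exact: le_trans c2q].
  exists q.1, q.2; split; first exact: (proj1 (proj1 Dq)).
split; first exact: (proj2 (proj1 Dq)).
split; first exact: (proj1 (proj2 Dq)).
split; first exact: (proj2 (proj2 Dq)).
move=> x /cov [p pD' Sx]; have [h1 h2] := qub p pD'.
have Dp : D p by have := D'D p pD'; rewrite in_setE.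
exact: (Sigma_mono _ _ _ _ _ (ltW (proj1 (proj1 Dp))) h1 h2 _ Sx).
Qed.
End Main.

Theorem proposition3p9 (R : realType) (m n N : nat)
    (sigma : 'M[R]_(m, n) -> 'M[R]_(m, n)) (r0 delta1 delta2 delta0 : R)
    (kappa : 'I_N -> ('M[R]_(m, n) * 'M[R]_(m, n))%type -> R)
    (gamma : 'I_N -> ('M[R]_(m, n) * 'M[R]_(m, n))%type ->
             ('M[R]_(m, n) * 'M[R]_(m, n))%type) :
  condition_O kappa gamma delta0 sigma r0 delta1 delta2 ->
  (* (i) *)
  (forall r lam, delta0 <= lam -> lam < 1 -> 0 < r -> r <= r0 ->
     (forall i, open (Lset_i kappa gamma r lam i)) /\
     open (Lset kappa gamma r lam) /\
     open (Sigma kappa gamma delta0 r lam) /\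
     open (Sigma1 kappa gamma delta0 r0)) /\
  (* (ii) *)
  (forall (k : 'I_N) r s lam, 0 < r -> r < s -> s <= r0 -> 0 <= lam -> lam <= 1 ->
     closure (Sset kappa gamma r lam k) `<=` Sset kappa gamma s lam k) /\
  (forall r s lam, 0 < r -> r < s -> s <= r0 -> delta0 <= lam -> lam < 1 ->
     closure (Sigma kappa gamma delta0 r lam) `<=` Sigma kappa gamma delta0 s lam) /\
  (* (iii) *)
  (forall Delta : set ('M[R]_(m, n) * 'M[R]_(m, n))%type,
     compact Delta -> Delta `<=` Sigma1 kappa gamma delta0 r0 ->
     exists r lam, 0 < r /\ r < r0 /\ delta0 <= lam /\ lam < 1 /\
       Delta `<=` Sigma kappa gamma delta0 r lam).
Proof.
move=> [N2 [sc [r0p [d1p [d12 [d21 [cont [kb [sum0 [P1i [P1ii [d20 [d01 P2]]]]]]]]]]]]].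
have kc : forall i, {within cball r0, continuous (kappa i)} by move=> i; exact: (cont i).1.
have gc : forall i, {within cball r0, continuous (gamma i)} by move=> i; exact: (cont i).2.
have oSl : forall r lam, 0 < r -> r <= r0 -> delta0 <= lam -> lam < 1 ->
    forall i, open (Sset kappa gamma r lam i).
  by move=> r lam h1 h2 h3 h4; exact: (P2 r lam h1 h2 (or_intror (conj h3 h4))).1.
have oS0 : forall r, 0 < r -> r <= r0 -> forall i, open (Sset kappa gamma r 0 i).
  by move=> r h1 h2; exact: (P2 r 0 h1 h2 (or_introl erefl)).1.
have oLi : forall r lam, 0 < r -> r <= r0 -> delta0 <= lam -> lam < 1 ->
    forall i, open (Lset_i kappa gamma r lam i).
  by move=> r lam h1 h2 h3 h4 i; apply: open_Li; [exact: oSl | exact: oS0].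
have oL : forall r lam, 0 < r -> r <= r0 -> delta0 <= lam -> lam < 1 ->
    open (Lset kappa gamma r lam).
  by move=> r lam h1 h2 h3 h4; apply: open_Lset; exact: oLi.
have oSig : forall r lam, 0 < r -> r <= r0 -> delta0 <= lam -> lam < 1 ->
    open (Sigma kappa gamma delta0 r lam).
  move=> r lam h1 h2 h3 h4; apply: open_Sigma => l /andP[l1 l2].
  by apply: oL => //; exact: le_lt_trans l2 h4.
have oSig1 : open (Sigma1 kappa gamma delta0 r0).
  by apply: open_Sigma1 => l /andP[l1 l2]; apply: oSig.
split.
  move=> r lam h3 h4 h1 h2; split; first exact: oLi.
  split; first exact: oL.
  by split; [exact: oSig|].
split.
  move=> k r s lam h1 h2 h3 _ _; exact: (@closure_S R m n N kappa gamma r0 kc gc k r s lam h1 h2 h3).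
split.
  move=> r s lam h1 h2 h3 _ _; exact: (@closure_Sigma R m n N kappa gamma r0 kc gc delta0 r s lam h1 h2 h3).
move=> Delta cD DS; apply: part3 => // r lam h1 h2 h3 h4; exact: oSig.
Qed.
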